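(* Let $b=2$, $c>0$ and $k\in\left(0,\frac{c}{3}\right)$. Let $\phi=\phi_k\in C^\infty(\mathbb{R})$ be the solitary wave profile of $$u_t-u_{txx}+3uu_x=2u_xu_{xx}+uu_{xxx},$$ that is, the travelling wave $u(t,x)=\phi(x-ct)$ with $\phi'(0)=0$, $\phi(x)\to k$ as $|x|\to\infty$ and $0<\phi<c$. Then the mapping $$k\mapsto Q(\phi)=\int_{\mathbb{R}}\left[2\frac{c-k}{c-\phi}-\left(\frac{c-k}{c-\phi}\right)^2-1\right]dx$$ is strictly increasing on $\left(0,\frac{c}{3}\right)$. *)

(* Defs.v *)
From Stdlib Require Import Reals.
From Coquelicot Require Import Coquelicot.
Open Scope R_scope.

Definition smooth (f : R -> R) : Prop := forall (n : nat) (x : R), ex_derive_n f n x.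

(* Travelling-wave equation obtained by substituting u(t,x) = phi(x - c t) into
   u_t - u_txx + 3 u u_x = 2 u_x u_xx + u u_xxx   (b = 2):
   -c phi' + c phi''' + 3 phi phi' = 2 phi' phi'' + phi phi'''. *)
Definition tw_ode (c : R) (phi : R -> R) : Prop :=
  forall x : R,
    - c * Derive phi x + c * Derive_n phi 3 x + 3 * phi x * Derive phi x
    = 2 * Derive phi x * Derive_n phi 2 x + phi x * Derive_n phi 3 x.

Definition solitary_wave (c k : R) (phi : R -> R) : Prop :=
  smooth phi /\ tw_ode c phi /\ Derive phi 0 = 0 /\
  is_lim phi p_infty k /\ is_lim phi m_infty k /\
  (forall x, 0 < phi x < c) /\
  (exists x, phi x <> k).

Definition Q_integrand (c k : R) (phi : R -> R) (x : R) : R :=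
  2 * ((c - k) / (c - phi x)) - ((c - k) / (c - phi x)) ^ 2 - 1.

(* Main.v *)
Require Import Defs.
From Stdlib Require Import Reals Lra Lia.
From Coquelicot Require Import Coquelicot.
Open Scope R_scope.

Lemma cont_of_der f x l : is_derive f x l -> continuity_pt f x.
Proof. intros H. apply derivable_continuous_pt. exists l. now apply is_derive_Reals. Qed.

Lemma mvt f f' a b : a < b -> (forall x, is_derive f x (f' x)) ->
  exists z, a <= z <= b /\ f b - f a = f' z * (b - a).
Proof.
  intros Hab H.
  destruct (MVT_cor2 f f' a b Hab) as [z [E Hz]].
  - intros z _. apply is_derive_Reals, H.
  - exists z; split; [lra|exact E].
Qed.

Lemma der0_const f : (forall x, is_derive f x 0) -> forall x, f x = f 0.
Proof.
  intros H x.
  destruct (Rtotal_order x 0) as [h|[h|h]].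
  - destruct (mvt f (fun _ => 0) x 0 h H) as [z [_ E]]. lra.
  - subst; reflexivity.
  - destruct (mvt f (fun _ => 0) 0 x h H) as [z [_ E]]. lra.
Qed.

Lemma lim_pinf f a : filterlim f (Rbar_locally p_infty) (locally a) ->
  forall eps, 0 < eps -> exists M, forall x, M < x -> Rabs (f x - a) < eps.
Proof.
  intros H eps He.
  destruct (proj1 (filterlim_locally f a) H (mkposreal eps He)) as [M HM].
  exists M. intros x Hx. apply HM. exact Hx.
Qed.

Lemma lim_minf f a : filterlim f (Rbar_locally m_infty) (locally a) ->
  forall eps, 0 < eps -> exists M, forall x, x < M -> Rabs (f x - a) < eps.
Proof.
  intros H eps He.
  destruct (proj1 (filterlim_locally f a) H (mkposreal eps He)) as [M HM].
  exists M. intros x Hx. apply HM. exact Hx.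
Qed.

Lemma lim_sq0 f f' a L : (forall x, is_derive f x (f' x)) ->
  filterlim f (Rbar_locally p_infty) (locally a) ->
  filterlim (fun x => f' x ^ 2) (Rbar_locally p_infty) (locally L) -> L = 0.
Proof.
  intros Hd Hf Hf'.
  destruct (Rtotal_order L 0) as [h|[h|h]]; [exfalso| exact h | exfalso].
  - destruct (lim_pinf _ _ Hf' (-L) ltac:(lra)) as [M HM].
    specialize (HM (M+1) ltac:(lra)).
    pose proof (pow2_ge_0 (f' (M+1))).
    apply Rabs_def2 in HM. lra.
  - set (d := Rmin 1 (L/8)).
    assert (Hd0 : 0 < d) by (unfold d; apply Rmin_glb_lt; lra).
    destruct (lim_pinf _ _ Hf' (L/2) ltac:(lra)) as [M1 HM1].
    destruct (lim_pinf _ _ Hf d Hd0) as [M2 HM2].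
    set (x := Rmax M1 M2 + 1).
    assert (h1 : M1 < x) by (unfold x; pose proof (Rmax_l M1 M2); lra).
    assert (h2 : M2 < x) by (unfold x; pose proof (Rmax_r M1 M2); lra).
    destruct (mvt f f' x (x+1) ltac:(lra) Hd) as [z [Hz E]].
    specialize (HM1 z ltac:(lra)). 
    pose proof (HM2 x h2) as A1. pose proof (HM2 (x+1) ltac:(lra)) as A2.
    apply Rabs_def2 in HM1. apply Rabs_def2 in A1. apply Rabs_def2 in A2.
    replace (x + 1 - x) with 1 in E by ring.
    assert (d <= 1) by apply Rmin_l. assert (d <= L/8) by apply Rmin_r.
    assert (Habs: Rabs (f' z) < 2*d) by (apply Rabs_def1; lra).
    assert (f' z ^ 2 < 4 * d * d).
    { apply Rabs_def2 in Habs. nra. }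
    nra.
Qed.

Lemma Dp (p p1 : R -> R) (x : R) : is_derive p x (p1 x) -> Derive (fun y : R => p y) x = p1 x.
Proof. intros H. apply is_derive_unique. exact H. Qed.


Lemma firstint (c : R) (p p1 p2 p3 : R -> R) :
 (forall x, is_derive p x (p1 x)) -> (forall x, is_derive p1 x (p2 x)) -> (forall x, is_derive p2 x (p3 x)) ->
 (forall x, - c * p1 x + c * p3 x + 3 * p x * p1 x = 2 * p1 x * p2 x + p x * p3 x) ->
 exists A B, (forall x, (c-p x)*p2 x - p1 x^2/2 + 3*p x^2/2 - c*p x = A) /\
   (forall x, (c - p x)*p1 x^2 - (2*A*p x - p x^3 + c*p x^2) = B).
Proof.
  intros D1 D2 D3 Ode.
  assert (E1 : forall x, ex_derive p x) by (intros x; eexists; apply D1).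
  assert (E2 : forall x, ex_derive p1 x) by (intros x; eexists; apply D2).
  assert (E3 : forall x, ex_derive p2 x) by (intros x; eexists; apply D3).
  assert (R1 : forall x, Derive p x = p1 x) by (intros x; apply is_derive_unique, D1).
  assert (R2 : forall x, Derive p1 x = p2 x) by (intros x; apply is_derive_unique, D2).
  assert (R3 : forall x, Derive p2 x = p3 x) by (intros x; apply is_derive_unique, D3).
  set (A := (c-p 0)*p2 0 - p1 0^2/2 + 3*p 0^2/2 - c*p 0).
  exists A.
  assert (HA : forall x, (c-p x)*p2 x - p1 x^2/2 + 3*p x^2/2 - c*p x = A).
  { apply (der0_const (fun x => (c-p x)*p2 x - p1 x^2/2 + 3*p x^2/2 - c*p x)).
    intros x. auto_derive.
    - repeat split; auto.
    - rewrite R1, R2, R3. pose proof (Ode x). nra. }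
  exists ((c - p 0)*p1 0^2 - (2*A*p 0 - p 0^3 + c*p 0^2)).
  split; [exact HA|].
  apply (der0_const (fun x => (c - p x)*p1 x^2 - (2*A*p x - p x^3 + c*p x^2))).
  intros x. auto_derive.
  - repeat split; auto.
  - rewrite R1, R2. rewrite <- (HA x). nra.
Qed.


Lemma ball_R (a e x : R) : ball a e x <-> Rabs (x - a) < e.
Proof. reflexivity. Qed.

Lemma sq_lim0 {T} (F : (T -> Prop) -> Prop) {FF : Filter F} (f : T -> R) :
  filterlim (fun x => f x ^ 2) F (locally 0) -> filterlim f F (locally 0).
Proof.
  intros H. apply filterlim_locally. intros eps.
  assert (He : 0 < eps * eps) by (pose proof (cond_pos eps); nra).
  pose proof (proj1 (filterlim_locally _ _) H (mkposreal _ He)) as H'.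
  eapply filter_imp; [|exact H']. intros x Hx.
  assert (Hx' : Rabs (f x ^ 2 - 0) < eps*eps) by exact Hx. clear Hx.
  change (Rabs (f x - 0) < eps).
  rewrite !Rminus_0_r in *. pose proof (cond_pos eps).
  rewrite Rabs_right in Hx' by nra.
  destruct (Rle_or_lt 0 (f x)).
  - rewrite Rabs_right by lra. nra.
  - rewrite Rabs_left by lra. nra.
Qed.

Lemma comp_cont (F : (R -> Prop) -> Prop) (p H : R -> R) k :
  filterlim p F (locally k) -> ex_derive H k -> filterlim (fun x => H (p x)) F (locally (H k)).
Proof.
  intros Hp Hd. eapply filterlim_comp; [exact Hp|].
  apply continuity_pt_filterlim. destruct Hd as [l Hl]. exact (cont_of_der _ _ _ Hl).
Qed.

Lemma constants (c k A B : R) (p p1 p2 : R -> R) :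
 0 < k -> k < c ->
 (forall x, is_derive p x (p1 x)) -> (forall x, is_derive p1 x (p2 x)) ->
 (forall x, 0 < p x < c) ->
 filterlim p (Rbar_locally p_infty) (locally k) ->
 (forall x, (c-p x)*p2 x - p1 x^2/2 + 3*p x^2/2 - c*p x = A) ->
 (forall x, (c - p x)*p1 x^2 - (2*A*p x - p x^3 + c*p x^2) = B) ->
 A = 3*k^2/2 - c*k /\ B = c*k^2 - 2*k^3.
Proof.
  intros k0 kc D1 D2 Hb Hl HA HB.
  set (H1 := fun y => (2*A*y - y^3 + c*y^2 + B)/(c-y)).
  assert (E1 : forall x, p1 x ^ 2 = H1 (p x)).
  { intros x. unfold H1. specialize (HB x). specialize (Hb x).
    field_simplify_eq; [|lra]. lra. }
  assert (L1 : filterlim (fun x => p1 x ^ 2) (Rbar_locally p_infty) (locally (H1 k))).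
  { eapply filterlim_ext; [intros x; symmetry; apply E1|].
    apply comp_cont; [exact Hl|]. unfold H1. auto_derive. lra. }
  pose proof (lim_sq0 p p1 k _ D1 Hl L1) as Z1.
  set (H2 := fun y => (A + H1 y/2 - 3*y^2/2 + c*y)/(c-y)).
  assert (E2 : forall x, p2 x ^ 2 = (H2 (p x))^2).
  { intros x. unfold H2. rewrite <- E1. specialize (HA x). specialize (Hb x).
    f_equal. field_simplify_eq; [|lra]. lra. }
  assert (L2 : filterlim (fun x => p2 x ^ 2) (Rbar_locally p_infty) (locally ((fun y => H2 y ^ 2) k))).
  { eapply filterlim_ext; [intros x; symmetry; apply E2|].
    apply (comp_cont _ p (fun y => H2 y ^ 2)); [exact Hl|]. unfold H2, H1. auto_derive. lra. }
  assert (L0 : filterlim p1 (Rbar_locally p_infty) (locally 0)).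
  { apply (sq_lim0 (Rbar_locally p_infty)). rewrite Z1 in L1. exact L1. }
  pose proof (lim_sq0 p1 p2 0 _ D2 L0 L2) as Z2.
  simpl in Z2. unfold H2 in Z2. rewrite Z1 in Z2.
  assert (Z3 : (A + 0 / 2 - 3 * k ^ 2 / 2 + c * k) / (c - k) = 0) by nra.
  assert (ZA : A = 3*k^2/2 - c*k).
  { apply Rmult_eq_compat_r with (r := c - k) in Z3. field_simplify in Z3; [|lra]. lra. }
  split; [exact ZA|].
  unfold H1 in Z1. apply Rmult_eq_compat_r with (r := c - k) in Z1.
  field_simplify in Z1; [|lra]. rewrite ZA in Z1. nra.
Qed.


Lemma never_k (c k : R) (p p1 : R -> R) :
 0 < k -> 
 (forall x, is_derive p x (p1 x)) ->
 (forall x, 0 < p x < c) ->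
 (forall x, (c - p x) * p1 x ^ 2 = (p x - k)^2 * (c - 2*k - p x)) ->
 (exists x, p x <> k) -> forall x, p x <> k.
Proof.
  intros k0 D1 Hb K1 [x0 Hx0] x1 Hx1.
  assert (Bd : forall x, p1 x ^ 2 <= (p x - k)^2).
  { intros x. specialize (K1 x). specialize (Hb x).
    assert (0 <= (p x - k)^2) by apply pow2_ge_0.
    apply Rmult_le_reg_l with (r := c - p x); [lra|]. rewrite K1. nra. }
  assert (Bd2 : forall x, (p x - k) * p1 x <= (p x - k)^2).
  { intros x. specialize (Bd x). pose proof (pow2_ge_0 (p x - k - p1 x)). nra. }
  assert (Bd3 : forall x, -(p x - k)^2 <= (p x - k) * p1 x).
  { intros x. specialize (Bd x). pose proof (pow2_ge_0 (p x - k + p1 x)). nra. }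
  apply Hx0.
  destruct (Rtotal_order x1 x0) as [h|[h|h]].
  - (* x0 > x1: u = (p-k)^2 exp(-2x) nonincreasing *)
    set (u := fun x => (p x - k)^2 * exp (-(2*x))).
    assert (Du : forall x, is_derive u x (2*((p x - k)*p1 x - (p x - k)^2) * exp (-(2*x)))).
    { intros x. unfold u. auto_derive.
      - eexists; apply D1.
      - rewrite (Dp _ _ _ (D1 x)). ring. }
    destruct (mvt u _ x1 x0 h Du) as [z [Hz E]].
    unfold u in E. rewrite Hx1 in E.
    pose proof (Bd2 z). pose proof (exp_pos (-(2*z))). pose proof (exp_pos (-(2*x0))).
    pose proof (pow2_ge_0 (p x0 - k)).
    assert (2 * ((p z - k) * p1 z - (p z - k) ^ 2) * exp (- (2 * z)) * (x0 - x1) <= 0).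
    { apply Rmult_le_0_r; [|lra]. apply Rmult_le_0_r; [|lra]. lra. }
    assert ((p x0 - k)^2 * exp (-(2*x0)) <= 0) by nra.
    assert ((p x0 - k)^2 = 0) by nra.
    assert (p x0 - k = 0) by (apply Rsqr_0_uniq; unfold Rsqr; nra). lra.
  - rewrite <- h; assumption.
  - set (u := fun x => (p x - k)^2 * exp (2*x)).
    assert (Du : forall x, is_derive u x (2*((p x - k)*p1 x + (p x - k)^2) * exp (2*x))).
    { intros x. unfold u. auto_derive.
      - eexists; apply D1.
      - rewrite (Dp _ _ _ (D1 x)). ring. }
    destruct (mvt u _ x0 x1 h Du) as [z [Hz E]].
    unfold u in E. rewrite Hx1 in E.
    pose proof (Bd3 z). pose proof (exp_pos (2*z)). pose proof (exp_pos (2*x0)).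
    pose proof (pow2_ge_0 (p x0 - k)).
    assert (0 <= 2 * ((p z - k) * p1 z + (p z - k) ^ 2) * exp (2 * z) * (x1 - x0)).
    { apply Rmult_le_pos; [|lra]. apply Rmult_le_pos; [|lra]. lra. }
    assert ((p x0 - k)^2 * exp (2*x0) <= 0) by nra.
    assert ((p x0 - k)^2 = 0) by nra.
    assert (p x0 - k = 0) by (apply Rsqr_0_uniq; unfold Rsqr; nra). lra.
Qed.


Lemma wsq (c k : R) (p p1 : R -> R) x :
 (forall x, 0 < p x < c) -> (forall x, p x <> k) ->
 (forall x, (c - p x) * p1 x ^ 2 = (p x - k)^2 * (c - 2*k - p x)) ->
 (p1 x / (p x - k))^2 = (c - 2*k - p x)/(c - p x).
Proof.
  intros Hb NK K1. specialize (Hb x). specialize (NK x). specialize (K1 x).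
  assert (p x - k <> 0) by lra.
  field_simplify_eq; [nra|]. repeat split; lra.
Qed.

Lemma wder (c k : R) (p p1 p2 : R -> R) x :
 (forall x, is_derive p x (p1 x)) -> (forall x, is_derive p1 x (p2 x)) ->
 (forall x, 0 < p x < c) -> (forall x, p x <> k) ->
 (forall x, (c - p x) * p1 x ^ 2 = (p x - k)^2 * (c - 2*k - p x)) ->
 (forall x, (c-p x)*p2 x - p1 x^2/2 + 3*p x^2/2 - c*p x = 3*k^2/2 - c*k) ->
 is_derive (fun y => p1 y / (p y - k)) x (- k * (p x - k) / (c - p x)^2).
Proof.
  intros D1 D2 Hb NK K1 K2.
  assert (Hd : is_derive (fun y => p1 y / (p y - k)) x ((p2 x * (p x - k) - p1 x * p1 x)/(p x - k)^2)).
  { auto_derive.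
    - repeat split; try (eexists; apply D1); try (eexists; apply D2). specialize (NK x). lra.
    - rewrite (Dp _ _ _ (D1 x)), (Dp _ _ _ (D2 x)). specialize (NK x). field. lra. }
  specialize (K1 x). specialize (K2 x). specialize (NK x). specialize (Hb x).
  assert (E1 : p1 x ^ 2 = (p x - k)^2*(c-2*k-p x)/(c - p x)) by (field_simplify_eq; lra).
  assert (E2 : p2 x = (3 * k ^ 2 / 2 - c * k + p1 x ^ 2 / 2 - 3 * p x ^ 2 / 2 + c * p x)/(c - p x))
    by (field_simplify_eq; lra).
  replace (- k * (p x - k) / (c - p x)^2) with ((p2 x * (p x - k) - p1 x * p1 x) / (p x - k) ^ 2); [exact Hd|].
  replace (p1 x * p1 x) with (p1 x ^ 2) by ring.
  rewrite E2, E1. field. split; lra.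
Qed.


Lemma wsign_pinf (c k : R) (p p1 : R -> R) :
 0 < k -> k < c/3 ->
 (forall x, is_derive p x (p1 x)) ->
 (forall x, 0 < p x < c) -> (forall x, p x <> k) ->
 (forall x, (c - p x) * p1 x ^ 2 = (p x - k)^2 * (c - 2*k - p x)) ->
 continuity (fun y => p1 y / (p y - k)) ->
 filterlim p (Rbar_locally p_infty) (locally k) ->
 exists X, forall x, X < x -> p1 x / (p x - k) = - sqrt ((c-2*k-p x)/(c-p x)).
Proof.
  intros k0 kc D1 Hb NK K1 Cw Hl.
  set (w := fun y => p1 y / (p y - k)).
  destruct (lim_pinf _ _ Hl ((c - 3*k)/2) ltac:(lra)) as [X HX].
  assert (Wnz : forall x, X < x -> w x <> 0).
  { intros x Hx Hw. pose proof (wsq c k p p1 x Hb NK K1) as E.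
    change (w x ^ 2 = (c - 2 * k - p x) / (c - p x)) in E. rewrite Hw in E. specialize (HX x Hx). apply Rabs_def2 in HX.
    specialize (Hb x).
    assert (0 < (c - 2 * k - p x) / (c - p x)) by (apply Rdiv_lt_0_compat; lra).
    simpl in E. lra. }
  assert (Wneg : forall x, X < x -> w x < 0).
  { intros x1 Hx1. destruct (Rlt_or_le (w x1) 0) as [h|h]; [exact h|exfalso].
    assert (h' : 0 < w x1) by (pose proof (Wnz x1 Hx1); lra).
    assert (Wpos : forall y, x1 <= y -> 0 < w y).
    { intros y Hy. destruct (Rlt_or_le 0 (w y)) as [h2|h2]; [exact h2|exfalso].
      assert (h3 : w y < 0) by (pose proof (Wnz y ltac:(lra)); lra).
      destruct (IVT_gen w x1 y 0 Cw) as [z [Hz Ez]].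
      { rewrite Rmin_right, Rmax_left by lra. lra. }
      rewrite Rmin_left, Rmax_right in Hz by lra.
      apply (Wnz z); [lra|exact Ez]. }
    set (q := fun x => (p x - k)^2).
    assert (Dq : forall x, is_derive q x (2 * (p x - k) * p1 x)).
    { intros x. unfold q. auto_derive. eexists; apply D1.
      rewrite (Dp _ _ _ (D1 x)). ring. }
    assert (Qinc : forall y, x1 < y -> q x1 <= q y).
    { intros y Hy. destruct (mvt q _ x1 y Hy Dq) as [z [Hz E]].
      pose proof (Wpos z ltac:(lra)) as Wz. unfold w in Wz.
      assert (0 <= 2 * (p z - k) * p1 z).
      { pose proof (NK z). 
        assert (p1 z = (p1 z / (p z - k)) * (p z - k)) by (field; lra).
        rewrite H0. pose proof (pow2_ge_0 (p z - k)). nra. }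
      nra. }
    assert (q0 : 0 < Rabs (p x1 - k)) by (apply Rabs_pos_lt; pose proof (NK x1); lra).
    destruct (lim_pinf _ _ Hl _ q0) as [X2 HX2].
    set (y := Rmax X2 x1 + 1).
    assert (y1 : X2 < y) by (unfold y; pose proof (Rmax_l X2 x1); lra).
    assert (y2 : x1 < y) by (unfold y; pose proof (Rmax_r X2 x1); lra).
    specialize (HX2 y y1). specialize (Qinc y y2). unfold q in Qinc.
    rewrite <- (pow2_abs (p x1 - k)) in Qinc. 
    rewrite <- (pow2_abs (p y - k)) in Qinc.
    pose proof (Rabs_pos (p y - k)). nra. }
  exists X. intros x Hx. change (w x = - sqrt ((c - 2 * k - p x) / (c - p x))).
  pose proof (wsq c k p p1 x Hb NK K1) as E.
  change (w x ^ 2 = (c - 2 * k - p x) / (c - p x)) in E. rewrite <- E.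
  pose proof (Wneg x Hx).
  replace ((w x)^2) with ((- w x)^2) by ring.
  rewrite sqrt_pow2 by lra. ring.
Qed.


Lemma wsign_minf (c k : R) (p p1 : R -> R) :
 0 < k -> k < c/3 ->
 (forall x, is_derive p x (p1 x)) ->
 (forall x, 0 < p x < c) -> (forall x, p x <> k) ->
 (forall x, (c - p x) * p1 x ^ 2 = (p x - k)^2 * (c - 2*k - p x)) ->
 continuity (fun y => p1 y / (p y - k)) ->
 filterlim p (Rbar_locally m_infty) (locally k) ->
 exists X, forall x, x < X -> p1 x / (p x - k) = sqrt ((c-2*k-p x)/(c-p x)).
Proof.
  intros k0 kc D1 Hb NK K1 Cw Hl.
  set (w := fun y => p1 y / (p y - k)).
  destruct (lim_minf _ _ Hl ((c - 3*k)/2) ltac:(lra)) as [X HX].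
  assert (Wnz : forall x, x < X -> w x <> 0).
  { intros x Hx Hw. pose proof (wsq c k p p1 x Hb NK K1) as E.
    change (w x ^ 2 = (c - 2 * k - p x) / (c - p x)) in E. rewrite Hw in E.
    specialize (HX x Hx). apply Rabs_def2 in HX.
    specialize (Hb x).
    assert (0 < (c - 2 * k - p x) / (c - p x)) by (apply Rdiv_lt_0_compat; lra).
    simpl in E. lra. }
  assert (Wpos : forall x, x < X -> 0 < w x).
  { intros x1 Hx1. destruct (Rlt_or_le 0 (w x1)) as [h|h]; [exact h|exfalso].
    assert (h' : w x1 < 0) by (pose proof (Wnz x1 Hx1); lra).
    assert (Wneg : forall y, y <= x1 -> w y < 0).
    { intros y Hy. destruct (Rlt_or_le (w y) 0) as [h2|h2]; [exact h2|exfalso].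
      assert (h3 : 0 < w y) by (pose proof (Wnz y ltac:(lra)); lra).
      destruct (IVT_gen w y x1 0 Cw) as [z [Hz Ez]].
      { rewrite Rmin_right, Rmax_left by lra. lra. }
      rewrite Rmin_left, Rmax_right in Hz by lra.
      apply (Wnz z); [lra|exact Ez]. }
    set (q := fun x => (p x - k)^2).
    assert (Dq : forall x, is_derive q x (2 * (p x - k) * p1 x)).
    { intros x. unfold q. auto_derive. eexists; apply D1.
      rewrite (Dp _ _ _ (D1 x)). ring. }
    assert (Qdec : forall y, y < x1 -> q x1 <= q y).
    { intros y Hy. destruct (mvt q _ y x1 Hy Dq) as [z [Hz E]].
      pose proof (Wneg z ltac:(lra)) as Wz. unfold w in Wz.
      assert (2 * (p z - k) * p1 z <= 0).
      { pose proof (NK z). 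
        assert (p1 z = (p1 z / (p z - k)) * (p z - k)) by (field; lra).
        rewrite H0. pose proof (pow2_ge_0 (p z - k)). nra. }
      nra. }
    assert (q0 : 0 < Rabs (p x1 - k)) by (apply Rabs_pos_lt; pose proof (NK x1); lra).
    destruct (lim_minf _ _ Hl _ q0) as [X2 HX2].
    set (y := Rmin X2 x1 - 1).
    assert (y1 : y < X2) by (unfold y; pose proof (Rmin_l X2 x1); lra).
    assert (y2 : y < x1) by (unfold y; pose proof (Rmin_r X2 x1); lra).
    specialize (HX2 y y1). specialize (Qdec y y2). unfold q in Qdec.
    rewrite <- (pow2_abs (p x1 - k)) in Qdec. 
    rewrite <- (pow2_abs (p y - k)) in Qdec.
    pose proof (Rabs_pos (p y - k)). nra. }
  exists X. intros x Hx. change (w x = sqrt ((c - 2 * k - p x) / (c - p x))).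
  pose proof (wsq c k p p1 x Hb NK K1) as E.
  change (w x ^ 2 = (c - 2 * k - p x) / (c - p x)) in E. rewrite <- E.
  pose proof (Wpos x Hx).
  rewrite sqrt_pow2 by lra. ring.
Qed.


Definition hh (r : R) := ln (1 + r) - ln (1 - r) - 2 * r / (1 - r^2).

Lemma core (c k : R) (p p1 p2 : R -> R) :
 0 < k -> k < c/3 ->
 (forall x, is_derive p x (p1 x)) -> (forall x, is_derive p1 x (p2 x)) ->
 (forall x, 0 < p x < c) -> (forall x, p x <> k) ->
 (forall x, (c - p x) * p1 x ^ 2 = (p x - k)^2 * (c - 2*k - p x)) ->
 (forall x, (c-p x)*p2 x - p1 x^2/2 + 3*p x^2/2 - c*p x = 3*k^2/2 - c*k) ->
 filterlim p (Rbar_locally p_infty) (locally k) ->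
 filterlim p (Rbar_locally m_infty) (locally k) ->
 is_RInt_gen (fun x => 2 * ((c - k) / (c - p x)) - ((c - k) / (c - p x)) ^ 2 - 1)
   (Rbar_locally m_infty) (Rbar_locally p_infty) (2 * hh (sqrt ((c - 2*k - k)/(c - k)))).
Proof.
  intros k0 kc D1 D2 Hb NK K1 K2 Lp Lm.
  set (w := fun y => p1 y / (p y - k)).
  set (r := sqrt ((c - 2*k - k)/(c - k))).
  assert (r2 : (c - 2*k - k)/(c - k) > 0) by (apply Rdiv_lt_0_compat; lra).
  assert (r2' : (c - 2*k - k)/(c - k) < 1) by (apply (Rmult_lt_reg_r (c - k)); [lra|]; field_simplify; lra).
  assert (r0 : 0 < r) by (apply sqrt_lt_R0; lra).
  assert (r1 : r < 1) by (rewrite <- sqrt_1; apply sqrt_lt_1; lra).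
  assert (rsq : r ^ 2 = (c - 2*k - k)/(c - k)) by (unfold r; rewrite <- Rsqr_pow2; apply Rsqr_sqrt; lra).
  set (Q := fun x => 2 * ((c - k) / (c - p x)) - ((c - k) / (c - p x)) ^ 2 - 1).
  set (G := fun t => (c-k)/k * t - ln (1+t) + ln (1-t)).
  set (F := fun x => G (w x)).
  assert (Dw : forall x, is_derive w x (- k * (p x - k) / (c - p x)^2)).
  { intros x. apply (wder c k p p1 p2 x D1 D2 Hb NK K1 K2). }
  assert (Cw : continuity w).
  { intros x. exact (cont_of_der _ _ _ (Dw x)). }
  assert (Wsq : forall x, w x ^ 2 = (c - 2*k - p x)/(c - p x)) by (intros x; apply (wsq c k p p1 x Hb NK K1)).
  assert (Wb : forall x, -1 < w x < 1).
  { intros x. pose proof (Wsq x). specialize (Hb x).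
    assert ((c - 2*k - p x)/(c - p x) < 1).
    { apply (Rmult_lt_reg_r (c - p x)); [lra|]. field_simplify; lra. }
    split; nra. }
  assert (DF : forall x, is_derive F x (Q x)).
  { intros x. pose proof (Wb x) as [wa wb].
    assert (HG : is_derive G (w x) ((c-k)/k - 1/(1 + w x) - 1/(1 - w x))).
    { unfold G. auto_derive; [lra|field; lra]. }
    pose proof (is_derive_comp G w x _ _ HG (Dw x)) as HF.
    change (is_derive F x (- k * (p x - k) / (c - p x) ^ 2 * ((c - k) / k - 1 / (1 + w x) - 1 / (1 - w x)))) in HF.
    assert (E : 1 / (1 + w x) + 1 / (1 - w x) = (c - p x)/k).
    { pose proof (Wsq x). specialize (Hb x).
      replace (1 / (1 + w x) + 1 / (1 - w x)) with (2 / (1 - w x ^ 2)) by (field; repeat split; nra).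
      rewrite H. field. repeat split; lra. }
    replace (Q x) with (- k * (p x - k) / (c - p x) ^ 2 * ((c - k) / k - 1 / (1 + w x) - 1 / (1 - w x))); [exact HF|].
    replace ((c - k) / k - 1 / (1 + w x) - 1 / (1 - w x)) with ((c - k) / k - (1 / (1 + w x) + 1 / (1 - w x))) by ring.
    rewrite E. unfold Q. specialize (Hb x). field. lra. }
  destruct (wsign_pinf c k p p1 k0 kc D1 Hb NK K1 Cw Lp) as [Xp HXp].
  destruct (wsign_minf c k p p1 k0 kc D1 Hb NK K1 Cw Lm) as [Xm HXm].
  set (Gp := fun y => G (- sqrt ((c - 2*k - y)/(c - y)))).
  set (Gm := fun y => G (sqrt ((c - 2*k - y)/(c - y)))).
  assert (LFp : filterlim F (Rbar_locally p_infty) (locally (Gp k))).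
  { apply (filterlim_ext_loc (fun x => Gp (p x))).
    - exists Xp. intros x Hx. unfold Gp, F. rewrite <- (HXp x Hx). reflexivity.
    - apply comp_cont; [exact Lp|]. unfold Gp, G. auto_derive.
      change ((c - 2 * k + - k) * / (c + - k)) with ((c - 2*k - k)/(c-k)). fold r. repeat split; lra. }
  assert (LFm : filterlim F (Rbar_locally m_infty) (locally (Gm k))).
  { apply (filterlim_ext_loc (fun x => Gm (p x))).
    - exists Xm. intros x Hx. unfold Gm, F. rewrite <- (HXm x Hx). reflexivity.
    - apply comp_cont; [exact Lm|]. unfold Gm, G. auto_derive.
      change ((c - 2 * k + - k) * / (c + - k)) with ((c - 2*k - k)/(c-k)). fold r. repeat split; lra. }
  assert (DQ : forall x, Derive F x = Q x) by (intros x; apply is_derive_unique, DF).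
  pose proof (is_RInt_gen_Derive (Fa := Rbar_locally m_infty) (Fb := Rbar_locally p_infty) F (Gm k) (Gp k)) as HI.
  assert (HI' : is_RInt_gen (Derive F) (Rbar_locally m_infty) (Rbar_locally p_infty) (Gp k - Gm k)).
  { apply HI.
    - apply filter_forall. intros ab x _. eexists; apply DF.
    - apply filter_forall. intros ab x _.
      apply (continuous_ext Q). { intros y; symmetry; apply DQ. }
      apply (ex_derive_continuous (K := R_AbsRing) (V := R_NormedModule)).
      unfold Q. auto_derive.
      + specialize (Hb x). repeat split; try (eexists; apply D1); lra.
    - exact LFm.
    - exact LFp. }
  replace (2 * hh r) with (Gp k - Gm k).
  - eapply is_RInt_gen_ext; [| exact HI'].
    apply filter_forall. intros ab x _. apply DQ.
  - unfold Gp, Gm, G, hh. fold r.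
    assert (E : (c - k) / k = 2 / (1 - r^2)).
    { rewrite rsq. field. repeat split; lra. }
    rewrite E. clearbody r. replace (1 + - r) with (1 - r) by ring. replace (1 - - r) with (1 + r) by ring. field. nra.
Qed.


Lemma wave (c k : R) (phi : R -> R) :
  0 < c -> 0 < k -> k < c / 3 -> solitary_wave c k phi ->
  is_RInt_gen (Q_integrand c k phi) (Rbar_locally m_infty) (Rbar_locally p_infty)
    (2 * hh (sqrt ((c - 2*k - k)/(c - k)))).
Proof.
  intros c0 k0 kc [Sm [Ode [_ [Lp [Lm [Hb Ex]]]]]].
  assert (D1 : forall x, is_derive phi x (Derive phi x)).
  { intros x. apply Derive_correct. exact (Sm 1%nat x). }
  assert (D2 : forall x, is_derive (Derive phi) x (Derive_n phi 2 x)).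
  { intros x. apply Derive_correct. exact (Sm 2%nat x). }
  assert (D3 : forall x, is_derive (Derive_n phi 2) x (Derive_n phi 3 x)).
  { intros x. apply Derive_correct. exact (Sm 3%nat x). }
  assert (Lp' : filterlim phi (Rbar_locally p_infty) (locally k)) by exact Lp.
  assert (Lm' : filterlim phi (Rbar_locally m_infty) (locally k)) by exact Lm.
  destruct (firstint c phi (Derive phi) (Derive_n phi 2) (Derive_n phi 3) D1 D2 D3 Ode) as [A [B [HA HB]]].
  destruct (constants c k A B phi (Derive phi) (Derive_n phi 2) k0 ltac:(lra) D1 D2 Hb Lp' HA HB) as [EA EB].
  subst A B.
  assert (K1 : forall x, (c - phi x) * Derive phi x ^ 2 = (phi x - k)^2 * (c - 2*k - phi x)).
  { intros x. specialize (HB x). nra. }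
  pose proof (never_k c k phi (Derive phi) k0 D1 Hb K1 Ex) as NK.
  exact (core c k phi (Derive phi) (Derive_n phi 2) k0 kc D1 D2 Hb NK K1 HA Lp' Lm').
Qed.

Lemma hh_dec a b : 0 < a -> a < b -> b < 1 -> hh b < hh a.
Proof.
  intros a0 ab b1.
  destruct (MVT_cor2 hh (fun t => - 4 * t^2 / (1 - t^2)^2) a b ab) as [z [E Hz]].
  - intros t Ht. apply is_derive_Reals. unfold hh. auto_derive.
    + repeat split; try lra. intro h. nra.
    + field. repeat split; try lra. intro h; nra.
  - assert (0 < 4 * z^2 / (1 - z^2)^2).
    { apply Rdiv_lt_0_compat; [nra|]. apply pow_lt. nra. }
    assert (- 4 * z ^ 2 / (1 - z ^ 2) ^ 2 * (b - a) < 0).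
    { replace (- 4 * z ^ 2 / (1 - z ^ 2) ^ 2 * (b - a)) with (- (4 * z ^ 2 / (1 - z ^ 2) ^ 2 * (b - a))) by (unfold Rdiv; ring).
      apply Ropp_lt_gt_0_contravar. apply Rmult_lt_0_compat; lra. }
    lra.
Qed.

Theorem lemma5p1 :
  forall (c k1 k2 : R) (phi1 phi2 : R -> R),
    0 < c -> 0 < k1 -> k1 < k2 -> k2 < c / 3 ->
    solitary_wave c k1 phi1 -> solitary_wave c k2 phi2 ->
    exists q1 q2 : R,
      is_RInt_gen (Q_integrand c k1 phi1) (Rbar_locally m_infty) (Rbar_locally p_infty) q1 /\
      is_RInt_gen (Q_integrand c k2 phi2) (Rbar_locally m_infty) (Rbar_locally p_infty) q2 /\
      q1 < q2.
Proof.
  intros c k1 k2 phi1 phi2 c0 k10 k12 k2c S1 S2.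
  eexists; eexists; split; [apply (wave c k1 phi1); auto; lra|].
  split; [apply (wave c k2 phi2); auto; lra|].
  set (a := (c - 2 * k2 - k2) / (c - k2)).
  set (b := (c - 2 * k1 - k1) / (c - k1)).
  assert (a0 : 0 < a) by (apply Rdiv_lt_0_compat; lra).
  assert (ab : a < b).
  { unfold a, b. apply (Rmult_lt_reg_r ((c - k1) * (c - k2))); [nra|].
    field_simplify; try lra. nra. }
  assert (b1 : b < 1) by (apply (Rmult_lt_reg_r (c - k1)); [lra|]; unfold b; field_simplify; lra).
  assert (sa : 0 < sqrt a) by (apply sqrt_lt_R0; lra).
  assert (sab : sqrt a < sqrt b) by (apply sqrt_lt_1; lra).
  assert (sb : sqrt b < 1) by (rewrite <- sqrt_1; apply sqrt_lt_1; lra).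
  pose proof (hh_dec _ _ sa sab sb). lra.
Qed.
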